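(* For every $\gamma\ge0$, $\bar{\mathcal R}_\gamma=\mathcal R_\gamma$. Equivalently, $\mathcal R_\gamma\times\{\gamma\}$ is exactly the set of triples $(E_1,E_2,E_\Omega)$ with $E_\Omega=\gamma$ that are achievable by fixed-length tests with a rejection option.
   Context: Standing assumptions: $\mathcal X$ is a finite set and $\mathsf P_1,\mathsf P_2$ are two distinct probability mass functions on $\mathcal X$, both with full support. Under hypothesis $H_i$ the observations $X_1,X_2,\dots$ are i.i.d. with law $\mathsf P_i$, and $\mathsf P_i(\cdot)$ denotes probability under $H_i$. $\gamma$-almost-fixed-length region: $(E_1,E_2)\in\mathcal R_\gamma$ if for every $\delta>0$ there exist $l\in\mathbb Z^+$, $C>0$, $n_0$, and for every $n\ge n_0$ a test $(\tau_n,d_n)$ with: - $\tau_n$ a stopping time for the natural filtration of $X_1,X_2,\dots$, and $d_n\in\{1,2\}$ a function of $X_1,\dots,X_{\tau_n}$; - $\tau_n\le Cn^l$; - $\mathsf P_i(\tau_n>n)\le e^{-\gamma n}$ for $i=1,2$; - $\mathsf P_1(d_n=2)\le e^{-(E_1-\delta)n}$; - $\mathsf P_2(d_n=1)\le e^{-(E_2-\delta)n}$. Tests with rejection option: a fixed-length test with rejection option on $n$ samples is a partition of $\mathcal X^n$ into three sets $A_1^n,A_2^n,A_\Omega^n$. On $A_i^n$ it accepts $H_i$; on $A_\Omega^n$ it rejects both hypotheses. Region $\bar{\mathcal R}_\gamma$: for $\gamma\ge0$, $(E_1,E_2)\in\bar{\mathcal R}_\gamma$ if for every $\delta>0$ there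 exist $n_0$ and, for every $n\ge n_0$, such a partition with: - $\mathsf P_1((X_1,\dots,X_n)\in A_2^n)\le e^{-(E_1-\delta)n}$; - $\mathsf P_2((X_1,\dots,X_n)\in A_1^n)\le e^{-(E_2-\delta)n}$; - $\mathsf P_1((X_1,\dots,X_n)\in A_\Omega^n)+\mathsf P_2((X_1,\dots,X_n)\in A_\Omega^n)\le e^{-(\gamma-\delta)n}$. *)

(* Defs.v *)
From Stdlib Require Import Reals.
From mathcomp Require Import all_boot.
Set Implicit Arguments. Unset Strict Implicit. Unset Printing Implicit Defensive.

Open Scope R_scope.

Inductive hyp := H1 | H2.
Definition hyp_eqb (a b : hyp) : bool :=
  match a, b with H1, H1 | H2, H2 => true | _, _ => false end.

Definition sumR (T : finType) (F : T -> R) : R := \big[Rplus/0]_(t : T) F t.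

Definition full_pmf (X : finType) (P : X -> R) : Prop :=
  (forall x, 0 < P x) /\ sumR P = 1.

Definition probN (X : finType) (P : X -> R) (N : nat) (A : pred (N.-tuple X)) : R :=
  \big[Rplus/0]_(s : N.-tuple X | A s) \big[Rmult/1]_(i < N) P (tnth s i).

(* A sequential test (tau, d) whose stopping time is bounded by N, viewed as
   a function of the first N samples.  [stop_rule tau d] says tau is a stopping
   time (the event {tau = k} depends only on X_1..X_k) and d is a function of
   X_1..X_tau: both are determined by the first tau samples. *)
Definition stop_rule (X : finType) (N : nat)
  (tau : N.-tuple X -> nat) (d : N.-tuple X -> hyp) : Prop :=
  (forall s, (tau s <= N)%N) /\
  (forall s s' : N.-tuple X,
     (forall i : 'I_N, (i < tau s)%N -> tnth s i = tnth s' i) ->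
     tau s' = tau s /\ d s' = d s).

Definition in_R_gamma (X : finType) (P1 P2 : X -> R) (gamma E1 E2 : R) : Prop :=
  forall delta, 0 < delta ->
  exists (l : nat) (C : R) (n0 : nat),
    (0 < l)%N /\ 0 < C /\
    forall n, (n0 <= n)%N ->
      exists (N : nat) (tau : N.-tuple X -> nat) (d : N.-tuple X -> hyp),
        stop_rule tau d /\
        (forall s, INR (tau s) <= C * INR n ^ l) /\
        probN P1 (fun s => (n < tau s)%N) <= exp (- (gamma * INR n)) /\
        probN P2 (fun s => (n < tau s)%N) <= exp (- (gamma * INR n)) /\
        probN P1 (fun s => hyp_eqb (d s) H2) <= exp (- ((E1 - delta) * INR n)) /\
        probN P2 (fun s => hyp_eqb (d s) H1) <= exp (- ((E2 - delta) * INR n)).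

(* Fixed-length test with rejection option on n samples: a partition of X^n
   into A_1, A_2, A_Omega, encoded as a map to option hyp
   (Some H1 = A_1, Some H2 = A_2, None = A_Omega). *)
Definition is_acc (o : option hyp) (h : hyp) : bool :=
  match o with Some h' => hyp_eqb h' h | None => false end.
Definition is_rej (o : option hyp) : bool :=
  match o with None => true | Some _ => false end.

Definition in_Rbar_gamma (X : finType) (P1 P2 : X -> R) (gamma E1 E2 : R) : Prop :=
  forall delta, 0 < delta ->
  exists n0 : nat,
    forall n, (n0 <= n)%N ->
      exists f : n.-tuple X -> option hyp,
        probN P1 (fun s => is_acc (f s) H2) <= exp (- ((E1 - delta) * INR n)) /\
        probN P2 (fun s => is_acc (f s) H1) <= exp (- ((E2 - delta) * INR n)) /\
        probN P1 (fun s => is_rej (f s)) + probN P2 (fun s => is_rej (f s))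
          <= exp (- ((gamma - delta) * INR n)).

(* Main.v *)
From HB Require Import structures.
Require Import Defs.
From Stdlib Require Import Reals Lra Classical FunctionalExtensionality.
From mathcomp Require Import all_boot zify.
Set Implicit Arguments. Unset Strict Implicit. Unset Printing Implicit Defensive.
Open Scope R_scope.

Lemma RplusA' : associative Rplus. Proof. by move=> x y z; rewrite Rplus_assoc. Qed.
Lemma RmultA' : associative Rmult. Proof. by move=> x y z; rewrite Rmult_assoc. Qed.
HB.instance Definition _ := Monoid.isComLaw.Build R 0 Rplus RplusA' Rplus_comm Rplus_0_l.
HB.instance Definition _ := Monoid.isComLaw.Build R 1 Rmult RmultA' Rmult_comm Rmult_1_l.
Lemma Rmul0m : left_zero 0 Rmult. Proof. move=> x; exact: Rmult_0_l. Qed.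
Lemma Rmulm0 : right_zero 0 Rmult. Proof. move=> x; exact: Rmult_0_r. Qed.
HB.instance Definition _ := Monoid.isMulLaw.Build R 0 Rmult Rmul0m Rmulm0.
Lemma RmulDl : left_distributive Rmult Rplus. Proof. move=> x y z; exact: Rmult_plus_distr_r. Qed.
Lemma RmulDr : right_distributive Rmult Rplus. Proof. move=> x y z; exact: Rmult_plus_distr_l. Qed.
HB.instance Definition _ := Monoid.isAddLaw.Build R Rmult Rplus RmulDl RmulDr.

Section W.
Variable X : finType.
Implicit Types (f : X -> R).

Definition wt f n (s : n.-tuple X) : R := \big[Rmult/1]_(i < n) f (tnth s i).

Lemma probNE f n A : probN f A = \big[Rplus/0]_(s : n.-tuple X | A s) wt f s.
Proof. by []. Qed.

Lemma wt_ge0 f n (s : n.-tuple X) : (forall x, 0 <= f x) -> 0 <= wt f s.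
Proof. move=> h; apply: big_ind => //; [lra| move=> ? ? ? ?; exact: Rmult_le_pos]. Qed.

Lemma sum_ge0 (I : finType) (P : pred I) (F : I -> R) :
  (forall i, 0 <= F i) -> 0 <= \big[Rplus/0]_(i | P i) F i.
Proof. move=> h; apply: big_ind => //; [lra| move=> ? ? ? ?; lra]. Qed.

Lemma sum_le (I : finType) (P Q : pred I) (F : I -> R) :
  (forall i, 0 <= F i) -> (forall i, P i -> Q i) ->
  \big[Rplus/0]_(i | P i) F i <= \big[Rplus/0]_(i | Q i) F i.
Proof.
move=> h hPQ; rewrite [X in _ <= X](bigID P) /=.
have -> : \big[Rplus/0]_(i | Q i && P i) F i = \big[Rplus/0]_(i | P i) F i.
  by apply: eq_bigl => i; case: (boolP (P i)) => Pi; rewrite ?andbT ?andbF ?hPQ.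
have := sum_ge0 (fun i => Q i && ~~ P i) h; lra.
Qed.

Lemma sum_le_fun (I : finType) (P : pred I) (F G : I -> R) :
  (forall i, P i -> F i <= G i) ->
  \big[Rplus/0]_(i | P i) F i <= \big[Rplus/0]_(i | P i) G i.
Proof. move=> h; apply: big_ind2 => //; [lra| move=> ? ? ? ? ? ?; lra]. Qed.

Lemma sum_union (I : finType) (P Q : pred I) (F : I -> R) :
  (forall i, 0 <= F i) ->
  \big[Rplus/0]_(i | P i || Q i) F i <=
  \big[Rplus/0]_(i | P i) F i + \big[Rplus/0]_(i | Q i) F i.
Proof.
move=> h; rewrite (bigID P) /=.
have -> : \big[Rplus/0]_(i | (P i || Q i) && P i) F i = \big[Rplus/0]_(i | P i) F i.
  by apply: eq_bigl => i; case: (P i); case: (Q i).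
apply: Rplus_le_compat_l; apply: sum_le => // i; case: (P i) => //=; by rewrite andbT.
Qed.

Definition tfst n k (z : (n + k).-tuple X) : n.-tuple X := [tuple tnth z (lshift k i) | i < n].
Definition tsnd n k (z : (n + k).-tuple X) : k.-tuple X := [tuple tnth z (rshift n i) | i < k].
Definition tcat n k (x : n.-tuple X) (y : k.-tuple X) : (n + k).-tuple X := [tuple of x ++ y].

Lemma tfst_cat n k x y : tfst (@tcat n k x y) = x.
Proof. apply: eq_from_tnth => i; by rewrite tnth_mktuple tnth_lshift. Qed.
Lemma tsnd_cat n k x y : tsnd (@tcat n k x y) = y.
Proof. apply: eq_from_tnth => i; by rewrite tnth_mktuple tnth_rshift. Qed.
Lemma tcat_split n k (z : (n + k).-tuple X) : tcat (tfst z) (tsnd z) = z.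
Proof.
apply: eq_from_tnth => i; case: (splitP i) => j hj.
- have -> : i = lshift k j by apply: val_inj.
  by rewrite tnth_lshift tnth_mktuple.
- have -> : i = rshift n j by apply: val_inj.
  by rewrite tnth_rshift tnth_mktuple.
Qed.

Lemma wt_cat f n k (z : (n + k).-tuple X) : wt f z = wt f (tfst z) * wt f (tsnd z).
Proof.
rewrite /wt big_split_ord /=; congr Rmult; apply: eq_bigr => i _; by rewrite tnth_mktuple.
Qed.

Lemma wsum_split f n k (A : pred (n.-tuple X)) (B : pred (k.-tuple X)) :
  \big[Rplus/0]_(z : (n + k).-tuple X | A (tfst z) && B (tsnd z)) wt f z =
  (\big[Rplus/0]_(x | A x) wt f x) * (\big[Rplus/0]_(y | B y) wt f y).
Proof.
rewrite big_distrlr /= pair_big /=.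
rewrite (reindex (fun p : n.-tuple X * k.-tuple X => tcat p.1 p.2)) /=; last first.
  exists (fun z => (tfst z, tsnd z)) => [[x y] _|z _] /=; by rewrite ?tfst_cat ?tsnd_cat ?tcat_split.
apply: eq_big => [[x y]|[x y] _] /=; by rewrite ?tfst_cat ?tsnd_cat // wt_cat tfst_cat tsnd_cat.
Qed.

End W.

Section W2.
Variable X : finType.
Implicit Types (f : X -> R).

Lemma wsum1 f : \big[Rplus/0]_(x : 1.-tuple X) wt f x = \big[Rplus/0]_(a : X) f a.
Proof.
rewrite (reindex (fun a : X => [tuple a])) /=; last first.
  exists (fun x : 1.-tuple X => thead x) => [a _|x _] //=.
  by apply: eq_from_tnth => i; rewrite (ord1 i).
apply: eq_bigr => a _; rewrite /wt big_ord1 /=.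
by rewrite (tnth_nth a) /=; lra.
Qed.

Lemma wsum_all f n : \big[Rplus/0]_(x : n.-tuple X) wt f x = (\big[Rplus/0]_(a : X) f a) ^ n.
Proof.
elim: n => [|n IH].
  rewrite (big_pred1 [tuple]) => [|x]; first by rewrite /wt big_ord0.
  by rewrite (tuple0 x) /= eq_refl.
have := @wsum_split X f 1%N n xpredT xpredT => /= ->.
by rewrite wsum1 IH.
Qed.

Lemma wsum_marg f n k (A : pred (n.-tuple X)) :
  \big[Rplus/0]_(a : X) f a = 1 ->
  \big[Rplus/0]_(z : (n + k).-tuple X | A (tfst z)) wt f z =
  \big[Rplus/0]_(x | A x) wt f x.
Proof.
move=> h1; rewrite -[RHS]Rmult_1_r -(pow1 k) -h1 -(wsum_all f k) -(@wsum_split X f n k A xpredT).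
by apply: eq_bigl => z; rewrite andbT.
Qed.

End W2.

Lemma exp_le x y : x <= y -> exp x <= exp y.
Proof. case=> [h|->]; [left; exact: exp_increasing | right=> //]. Qed.

Lemma pmf_ge0 (X : finType) (P : X -> R) : full_pmf P -> forall x, 0 <= P x.
Proof. by case=> h _ x; left; apply: h. Qed.

Lemma pmf_sum (X : finType) (P : X -> R) : full_pmf P -> \big[Rplus/0]_(a : X) P a = 1.
Proof. by case. Qed.

Lemma pmf_wit (X : finType) (P : X -> R) : full_pmf P -> exists x : X, true.
Proof.
case=> _ hs; case: (pickP (fun _ : X => true)) => [x _|h]; first by exists x.
move: hs; rewrite /sumR big_pred0 // => h0; lra.
Qed.

Lemma probN_le (X : finType) (P : X -> R) N (A B : pred (N.-tuple X)) :
  (forall x, 0 <= P x) -> (forall s, A s -> B s) -> probN P A <= probN P B.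
Proof. move=> h hAB; rewrite !probNE; apply: sum_le => // s; exact: wt_ge0. Qed.

Lemma probN_ge0 (X : finType) (P : X -> R) N (A : pred (N.-tuple X)) :
  (forall x, 0 <= P x) -> 0 <= probN P A.
Proof. move=> h; rewrite probNE; apply: sum_ge0 => s; exact: wt_ge0. Qed.

Lemma probN_eq (X : finType) (P : X -> R) N (A B : pred (N.-tuple X)) :
  (forall s, A s = B s) -> probN P A = probN P B.
Proof. by move=> h; rewrite !probNE; apply: eq_bigl. Qed.

Lemma probN_marg (X : finType) (P : X -> R) n k (A : pred (n.-tuple X)) :
  full_pmf P ->
  probN P (fun z : (n + k).-tuple X => A (tfst z)) = probN P A.
Proof. move=> hP; rewrite !probNE; exact: wsum_marg (pmf_sum hP). Qed.

Lemma probN_pred0 (X : finType) (P : X -> R) N : probN P (fun _ : N.-tuple X => false) = 0.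
Proof. by rewrite probNE big_pred0. Qed.

Lemma two_exp g d n : 0 < d -> 1 <= d * INR n ->
  exp (- (g * INR n)) + exp (- (g * INR n)) <= exp (- ((g - d) * INR n)).
Proof.
move=> hd hn.
have -> : - ((g - d) * INR n) = - (g * INR n) + d * INR n by ring.
rewrite exp_plus; have := exp_ineq1_le (d * INR n); have := exp_pos (- (g * INR n)); nra.
Qed.

Lemma R_to_Rbar (X : finType) (P1 P2 : X -> R) (hP1 : full_pmf P1) (hP2 : full_pmf P2)
  gamma E1 E2 : in_R_gamma P1 P2 gamma E1 E2 -> in_Rbar_gamma P1 P2 gamma E1 E2.
Proof.
move=> hR delta hd; have [l [C [n0 [_ [_ H]]]]] := hR delta hd.
have [K [hK hK0']] := archimed_cor1 delta hd.
exists (maxn n0 K) => n; rewrite geq_max => /andP [hn0 hnK].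
have hdn : 1 <= delta * INR n.
  have hK0 : 0 < INR K by apply: lt_0_INR.
  have : INR K <= INR n by apply: le_INR; apply/leP.
  have : 1 < delta * INR K.
    have := Rmult_lt_compat_r (INR K) _ _ hK0 hK; rewrite Rinv_l; lra.
  nra.
have g1 := pmf_ge0 hP1; have g2 := pmf_ge0 hP2.
have [x0 _] := pmf_wit hP1.
have [N [tau [d [[htN hst] [_ [h1 [h2 [e1 e2]]]]]]]] := H n hn0.
case: (leqP N n) => hNn.
- have [k hk] : exists k, n = (N + k)%N by exists (n - N)%N; rewrite subnKC.
  subst n.
  exists (fun s => Some (d (tfst s))); split; [|split].
  + apply: Rle_trans e1; right.
    rewrite -(@probN_marg X P1 N k (fun x => hyp_eqb (d x) H2) hP1); exact: probN_eq.
  + apply: Rle_trans e2; right.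
    rewrite -(@probN_marg X P2 N k (fun x => hyp_eqb (d x) H1) hP2); exact: probN_eq.
  + rewrite !(probN_eq _ (B := fun _ => false)) // !probN_pred0.
    rewrite Rplus_0_l; left; exact: exp_pos.
- have [k hk] : exists k, N = (n + k)%N by exists (N - n)%N; rewrite subnKC // ltnW.
  subst N.
  pose pad : k.-tuple X := [tuple of nseq k x0].
  pose f (x : n.-tuple X) := let z := tcat x pad in
    if (tau z <= n)%N then Some (d z) else None.
  have agree : forall z : (n + k).-tuple X, forall i : 'I_(n + k), (i < n)%N ->
      tnth z i = tnth (tcat (tfst z) pad) i.
    move=> z i hi; have -> : i = lshift k (Ordinal hi) by apply: val_inj.
    by rewrite tnth_lshift tnth_mktuple.
  have key : forall z : (n + k).-tuple X,
      ((tau (tcat (tfst z) pad) <= n)%N = (tau z <= n)%N) /\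
      ((tau z <= n)%N -> d (tcat (tfst z) pad) = d z).
    move=> z; case: (leqP (tau z) n) => hz.
    + have [e1' e2'] := hst z (tcat (tfst z) pad)
        (fun i hi => agree z i (leq_trans hi hz)).
      by rewrite e1' hz.
    + split=> //; apply/negbTE/negP => hz'.
      have [e1' _] := hst (tcat (tfst z) pad) z
        (fun i hi => esym (agree z i (leq_trans hi hz'))).
      by move: hz; rewrite e1' ltnNge hz'.
  exists f; split; [|split].
  + rewrite -(@probN_marg X P1 n k _ hP1); apply: Rle_trans e1; apply: probN_le => // z.
    rewrite /f /=; have [-> hd'] := key z; case: (leqP (tau z) n) => // hz.
    by rewrite hd'.
  + rewrite -(@probN_marg X P2 n k _ hP2); apply: Rle_trans e2; apply: probN_le => // z.
    rewrite /f /=; have [-> hd'] := key z; case: (leqP (tau z) n) => // hz.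
    by rewrite hd'.
  + rewrite -(@probN_marg X P1 n k _ hP1) -(@probN_marg X P2 n k _ hP2).
    rewrite !(probN_eq _ (B := fun z => (n < tau z)%N)); last first.
      by move=> z; rewrite /f /=; have [-> _] := key z; case: (leqP (tau z) n).
      by move=> z; rewrite /f /=; have [-> _] := key z; case: (leqP (tau z) n).
    apply: Rle_trans (two_exp gamma hd hdn); lra.
Qed.

Lemma exp_nat y n : exp (INR n * y) = exp y ^ n.
Proof.
elim: n => [|n IH]; first by rewrite /= Rmult_0_l exp_0.
rewrite S_INR Rmult_plus_distr_r Rmult_1_l exp_plus IH /=; ring.
Qed.

Lemma sum_const_ord n : \big[Rplus/0]_(i < n) 1 = INR n.
Proof.
rewrite big_const_ord; elim: n => [//|n IH]; rewrite S_INR /= IH; ring.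
Qed.

Lemma exp_sum (I : finType) (F : I -> R) :
  \big[Rmult/1]_(i : I) exp (F i) = exp (\big[Rplus/0]_(i : I) F i).
Proof.
symmetry; apply: (big_morph exp (id1 := 1) (op1 := Rmult)).
- by move=> x y; rewrite exp_plus.
- exact: exp_0.
Qed.

Section Chern.
Variable X : finType.
Variable f : X -> R.
Hypothesis hf : full_pmf f.

Definition indR (A : pred X) (a : X) : R := if A a then 1 else 0.
Definition Ssum (A : pred X) n (x : n.-tuple X) : R := \big[Rplus/0]_(i < n) indR A (tnth x i).

Lemma Ssum_compl (A : pred X) n (x : n.-tuple X) :
  Ssum A x + Ssum (predC A) x = INR n.
Proof.
rewrite /Ssum -big_split /= -sum_const_ord; apply: eq_bigr => i _.
by rewrite /indR /=; case: (A _) => /=; ring.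
Qed.

Lemma chernoff (A : pred X) (c : R) :
  \big[Rplus/0]_(a | A a) f a < c ->
  exists rho, 0 < rho < 1 /\ forall n,
    probN f (fun x : n.-tuple X => Rle_dec (c * INR n) (Ssum A x)) <= rho ^ n.
Proof.
set mu := \big[Rplus/0]_(a | A a) f a => hmu.
have mu0 : 0 <= mu by apply: sum_ge0; apply: pmf_ge0.
have c0 : 0 < c by lra.
set h := (c - mu) / (2 * c).
have hdef : h * (2 * c) = c - mu by rewrite /h; field; lra.
have h0 : 0 < h by nra.
have h1 : h < 1 by nra.
set rho := exp (- (h * c)) * (1 + (exp h - 1) * mu).
have ehpos : 1 <= exp h by have := exp_ineq1_le h; lra.
have hb : (exp h - 1) * (1 - h) <= h.
  have := exp_ineq1_le (- h); rewrite exp_Ropp => hh.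
  have hpos := exp_pos h.
  have : (1 - h) * exp h <= / exp h * exp h by apply: Rmult_le_compat_r; lra.
  rewrite Rinv_l; nra.
have hmain : (exp h - 1) * mu < h * c.
  have hmu2 : mu < c * (1 - h) by nra.
  have : (exp h - 1) * mu * (1 - h) < h * c * (1 - h).
    have : (exp h - 1) * (1 - h) * mu <= h * mu by apply: Rmult_le_compat_r.
    nra.
  move=> hh; apply: (Rmult_lt_reg_r (1 - h)); lra.
have rpos : 0 < rho.
  rewrite /rho; apply: Rmult_lt_0_compat; first exact: exp_pos.
  have : 0 <= (exp h - 1) * mu by apply: Rmult_le_pos; lra.
  lra.
exists rho; split; [split=> //|].
- rewrite /rho exp_Ropp; have := exp_ineq1_le (h * c); have := exp_pos (h * c) => hp he.
  apply: (Rmult_lt_reg_l (exp (h * c))) => //.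
  rewrite -Rmult_assoc Rinv_r; lra.
- move=> n.
  pose g a := f a * exp (h * indR A a).
  have wtg : forall x : n.-tuple X, wt g x = wt f x * exp (h * Ssum A x).
    move=> x; rewrite /wt /g big_split /= exp_sum /Ssum; congr (_ * exp _).
    by rewrite big_distrr.
  have sg : \big[Rplus/0]_(a : X) g a = 1 + (exp h - 1) * mu.
    have hc : \big[Rplus/0]_(i | true && ~~ A i) f i = 1 - mu.
      have := pmf_sum hf; rewrite (bigID A) /= /mu; lra.
    rewrite (bigID A) /= /mu.
    have -> : \big[Rplus/0]_(i | true && A i) g i = exp h * \big[Rplus/0]_(a | A a) f a.
      rewrite big_distrr /=; apply: eq_big => // a ha; rewrite /g /indR ha Rmult_1_r; ring.
    have -> : \big[Rplus/0]_(i | true && ~~ A i) g i = \big[Rplus/0]_(i | true && ~~ A i) f i.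
      apply: eq_bigr => a /= ha; rewrite /g /indR (negbTE ha) Rmult_0_r exp_0; ring.
    rewrite hc /mu; ring.
  rewrite probNE /rho Rpow_mult_distr -sg -(wsum_all g n) -exp_nat big_distrr /=.
  eapply Rle_trans; [apply: sum_le_fun | apply: sum_le].
  + move=> x; case: (Rle_dec _ _) => //= hx _.
    rewrite wtg; have hw := wt_ge0 x (pmf_ge0 hf).
    rewrite -Rmult_assoc (Rmult_comm _ (wt f x)) Rmult_assoc -exp_plus.
    have : 1 <= exp (INR n * - (h * c) + h * Ssum A x).
      have := exp_ineq1_le (INR n * - (h * c) + h * Ssum A x); nra.
    nra.
  + move=> x; rewrite wtg; apply: Rmult_le_pos; first by left; apply: exp_pos.
    apply: Rmult_le_pos; [exact: wt_ge0 (pmf_ge0 hf)| left; exact: exp_pos].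
  + by [].
Qed.
End Chern.

Definition atom (X : finType) (a : X) : pred X := fun y => y == a.
Definition natom (X : finType) (a : X) : pred X := fun y => y != a.

Lemma Ssum_atom (X : finType) (a : X) n (x : n.-tuple X) :
  Ssum (atom a) x + Ssum (natom a) x = INR n.
Proof.
rewrite /Ssum -big_split /= -sum_const_ord; apply: eq_bigr => i _.
rewrite /indR /atom /natom /=; case: (tnth x i == a) => /=; [exact: Rplus_0_r | exact: Rplus_0_l].
Qed.

Lemma chern_pair (X : finType) (Pa Pb : X -> R) (ha : full_pmf Pa) (hb : full_pmf Pb) (a : X) :
  Pa a < Pb a -> exists c rho, 0 < rho < 1 /\ forall n,
   probN Pa (fun x : n.-tuple X => Rle_dec (c * INR n) (Ssum (atom a) x)) <= rho ^ n /\
   probN Pb (fun x : n.-tuple X => ~~ Rle_dec (c * INR n) (Ssum (atom a) x)) <= rho ^ n.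
Proof.
move=> hab; set c := (Pa a + Pb a) / 2.
have [r1 [[hr1 hr1'] H1']] : exists rho, 0 < rho < 1 /\ forall n,
    probN Pa (fun x : n.-tuple X => Rle_dec (c * INR n) (Ssum (atom a) x)) <= rho ^ n.
  apply: chernoff => //; rewrite (big_pred1 a) /c //; lra.
have [r2 [[hr2 hr2'] H2']] : exists rho, 0 < rho < 1 /\ forall n,
    probN Pb (fun x : n.-tuple X => Rle_dec ((1 - c) * INR n) (Ssum (natom a) x)) <= rho ^ n.
  apply: chernoff => //.
  have := pmf_sum hb; rewrite (bigD1 a) //= => hs.
  have -> : \big[Rplus/0]_(a0 | natom a a0) Pb a0 = 1 - Pb a.
    rewrite -hs; ring_simplify; by apply: eq_bigl.
  rewrite /c; lra.
exists c, (Rmax r1 r2); split.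
  split; [apply: (Rlt_le_trans _ r1); [lra|apply: Rmax_l] | apply: Rmax_lub_lt; lra].
move=> n; split.
- apply: Rle_trans (H1' n) _; apply: pow_incr; split; [lra|apply: Rmax_l].
- apply: Rle_trans (pow_incr r2 (Rmax r1 r2) n _); last by split; [lra|apply: Rmax_r].
  apply: Rle_trans (H2' n); apply: probN_le; first exact: pmf_ge0.
  move=> x; case: (Rle_dec _ _) => //= hx _.
  case: (Rle_dec _ _) => //= hx'; exfalso; apply: hx'.
  have h1 := Rnot_le_lt _ _ hx; have h2 := Ssum_atom a x.
  rewrite Rmult_minus_distr_r Rmult_1_l; lra.
Qed.

Lemma chern_test (X : finType) (P1 P2 : X -> R) (hP1 : full_pmf P1) (hP2 : full_pmf P2) :
  P1 <> P2 -> exists rho, 0 < rho < 1 /\ forall n, exists T : n.-tuple X -> hyp,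
    probN P1 (fun x => hyp_eqb (T x) H2) <= rho ^ n /\
    probN P2 (fun x => hyp_eqb (T x) H1) <= rho ^ n.
Proof.
move=> hne.
have [a ha] : exists a, P1 a <> P2 a.
  apply: NNPP => hn; apply: hne; apply: functional_extensionality => a.
  apply: NNPP => h; apply: hn; by exists a.
case: (Rlt_dec (P1 a) (P2 a)) => hlt.
- have [c [rho [hr H]]] := chern_pair hP1 hP2 hlt.
  exists rho; split=> // n; exists (fun x => if Rle_dec (c * INR n) (Ssum (atom a) x) then H2 else H1).
  have [e1 e2] := H n; split.
  + apply: Rle_trans e1; right; apply: probN_eq => x; by case: (Rle_dec _ _).
  + apply: Rle_trans e2; right; apply: probN_eq => x; by case: (Rle_dec _ _).
- have hlt' : P2 a < P1 a by lra.
  have [c [rho [hr H]]] := chern_pair hP2 hP1 hlt'.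
  exists rho; split=> // n; exists (fun x => if Rle_dec (c * INR n) (Ssum (atom a) x) then H1 else H2).
  have [e1 e2] := H n; split.
  + apply: Rle_trans e2; right; apply: probN_eq => x; by case: (Rle_dec _ _).
  + apply: Rle_trans e1; right; apply: probN_eq => x; by case: (Rle_dec _ _).
Qed.

Section Types.
Variable X : finType.

Definition ty n (x : n.-tuple X) : {ffun X -> 'I_n.+1} := [ffun a => inord (count_mem a x)].

Lemma tyE n (x : n.-tuple X) a : nat_of_ord (ty x a) = count_mem a x.
Proof. by rewrite ffunE inordK // ltnS (leq_trans (count_size _ x)) // size_tuple. Qed.

Lemma ty_eq_count n (x y : n.-tuple X) : ty x = ty y -> forall a, count_mem a x = count_mem a y.
Proof. by move=> h a; rewrite -!tyE h. Qed.

Lemma wt_ty (f : X -> R) n (x y : n.-tuple X) : ty x = ty y -> wt f x = wt f y.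
Proof.
move=> h; have hp : perm_eq x y.
  by apply/allP => z _ /=; rewrite (ty_eq_count h).
rewrite /wt -(@big_tuple R 1 Rmult X n x xpredT f) -(@big_tuple R 1 Rmult X n y xpredT f).
exact: perm_big.
Qed.

Definition tadd n k (Q : {ffun X -> 'I_n.+1}) (R' : {ffun X -> 'I_k.+1}) : {ffun X -> 'I_(n + k).+1} :=
  [ffun a => inord (Q a + R' a)].

Lemma ty_cat n k (z : (n + k).-tuple X) : ty z = tadd (ty (tfst z)) (ty (tsnd z)).
Proof.
apply/ffunP => a; apply: val_inj => /=.
rewrite /tadd ffunE inordK; last first.
  by rewrite !tyE ltnS -count_cat (leq_trans (count_size _ (tcat (tfst z) (tsnd z)))) // size_tuple.
rewrite !tyE -count_cat; congr (count_mem a _).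
by rewrite -[in LHS](tcat_split z).
Qed.

Definition cm (f : X -> R) n (Q : {ffun X -> 'I_n.+1}) := probN f (fun x : n.-tuple X => ty x == Q).

Lemma sum_cst (I : finType) (c : R) : \big[Rplus/0]_(i : I) c = INR #|I| * c.
Proof.
rewrite big_const; elim: #|_| => [|k IH]; first by rewrite /= Rmult_0_l.
rewrite -[iter _ _ _]/(c + iter k (Rplus c) 0) IH S_INR; ring.
Qed.

Lemma card_types n : #|{ffun X -> 'I_n.+1}| = (n.+1 ^ #|X|)%N.
Proof. by rewrite card_ffun card_ord. Qed.

Lemma probN_ty (f : X -> R) n (p : pred {ffun X -> 'I_n.+1}) :
  probN f (fun x : n.-tuple X => p (ty x)) = \big[Rplus/0]_(Q | p Q) cm f Q.
Proof.
rewrite probNE (partition_big (fun x : n.-tuple X => ty x) p) //=.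
apply: eq_bigr => Q hQ; rewrite /cm probNE; apply: eq_bigl => x.
by case: (boolP (ty x == Q)) => [/eqP ->|]; rewrite ?hQ ?andbF.
Qed.

Lemma probN_ty_le (f : X -> R) n (p : pred {ffun X -> 'I_n.+1}) (B : R) :
  (forall x, 0 <= f x) -> 0 <= B -> (forall Q, p Q -> cm f Q <= B) ->
  probN f (fun x : n.-tuple X => p (ty x)) <= INR (n.+1 ^ #|X|) * B.
Proof.
move=> hf hB hQ; rewrite probN_ty -card_types -sum_cst.
apply: Rle_trans (sum_le_fun (P := p) (G := fun _ => B) _) _.
  exact: hQ.
apply: sum_le => //.
Qed.

Lemma cm_mult (f : X -> R) n k (Q : {ffun X -> 'I_n.+1}) (R' : {ffun X -> 'I_k.+1}) :
  (forall x, 0 <= f x) -> cm f Q * cm f R' <= cm f (tadd Q R').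
Proof.
move=> hf; rewrite /cm !probNE -wsum_split.
apply: sum_le => [z|z /andP [/eqP h1 /eqP h2]]; first exact: wt_ge0.
by rewrite ty_cat h1 h2.
Qed.

End Types.

Lemma sum_lt (I : finType) (i0 : I) (F G : I -> R) :
  (forall i, F i < G i) -> \big[Rplus/0]_(i : I) F i < \big[Rplus/0]_(i : I) G i.
Proof.
move=> h; rewrite (bigD1 i0) //= [X in _ < X](bigD1 i0) //=.
apply: Rplus_lt_le_compat => //; apply: sum_le_fun => i _; left; exact: h.
Qed.

Lemma prod_le n (a b : 'I_n -> R) : (forall i, 0 <= a i <= b i) ->
  0 <= \big[Rmult/1]_(i < n) a i <= \big[Rmult/1]_(i < n) b i.
Proof.
move=> h; apply: (big_ind2 (fun x y => 0 <= x <= y)) => //; first lra.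
move=> x1 x2 y1 y2 [h1 h2] [h3 h4]; split; first exact: Rmult_le_pos.
apply: Rmult_le_compat => //.
Qed.

Lemma prod_cst n c : \big[Rmult/1]_(i < n) c = c ^ n.
Proof.
rewrite big_const_ord; elim: n => [//|n IH] /=; by rewrite IH.
Qed.

Lemma pmf_le1 (X : finType) (P : X -> R) : full_pmf P -> forall a, P a <= 1.
Proof.
move=> hP a; have := pmf_sum hP; rewrite (bigD1 a) //= => hs.
have := sum_ge0 (fun i => i != a) (pmf_ge0 hP); lra.
Qed.

Lemma pmin_ex (X : finType) (P1 P2 : X -> R) : full_pmf P1 -> full_pmf P2 ->
  exists L, 0 < L /\ forall a, exp (- L) <= P1 a /\ exp (- L) <= P2 a.
Proof.
move=> [h1 _] [h2 _].
pose m := foldr (fun a acc => Rmin (Rmin (P1 a) (P2 a)) acc) (1/2) (enum X).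
have hm : 0 < m /\ m <= 1/2 /\ forall a, a \in enum X -> m <= P1 a /\ m <= P2 a.
  rewrite /m; elim: (enum X) => [|b s [IH1 [IH2 IH3]]] /=; first by split; [lra| split=> //; lra].
  split; [|split].
  - apply: Rmin_pos => //; apply: Rmin_pos; [exact: h1|exact: h2].
  - apply: Rle_trans (Rmin_r _ _) _; lra.
  - move=> a; rewrite in_cons => /orP [/eqP ->|ha].
    + split; apply: Rle_trans (Rmin_l _ _) _; [exact: Rmin_l|exact: Rmin_r].
    + have [ha1 ha2] := IH3 a ha; split; apply: Rle_trans (Rmin_r _ _) _ => //.
have [m0 [m1 m2]] := hm.
exists (- ln m); split.
  have : ln m < ln 1 by apply: ln_increasing => //; lra.
  rewrite ln_1; lra.
rewrite Ropp_involutive exp_ln // => a; apply: m2; exact: mem_enum.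
Qed.

Section Maj.
Variable X : finType.

Lemma wt_lower (f : X -> R) L n (x : n.-tuple X) : (forall a, exp (- L) <= f a) ->
  exp (- L) ^ n <= wt f x.
Proof.
move=> h; rewrite -prod_cst; apply: (proj2 (prod_le _)) => i; split; last exact: h.
left; exact: exp_pos.
Qed.

Lemma wt_le1 (f : X -> R) n (x : n.-tuple X) : (forall a, 0 <= f a <= 1) -> wt f x <= 1.
Proof.
move=> h; apply: Rle_trans (proj2 (prod_le (b := fun _ => 1) _)) _ => [i|]; first exact: h.
by rewrite prod_cst pow1; right.
Qed.

Lemma cm_lower (Pa Pb : X -> R) L k (R' : {ffun X -> 'I_k.+1}) :
  (forall a, exp (- L) <= Pa a) -> (forall a, 0 <= Pb a <= 1) ->
  exp (- L) ^ k * cm Pb R' <= cm Pa R'.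
Proof.
move=> ha hb; rewrite /cm !probNE big_distrr /=; apply: sum_le_fun => z _.
have := wt_lower z ha; have := wt_le1 z hb.
have : 0 <= wt Pb z by apply: wt_ge0 => a; case: (hb a).
have := pow_lt (exp (- L)) k (exp_pos _); nra.
Qed.

Lemma best_type (f : X -> R) k : full_pmf f ->
  exists R' : {ffun X -> 'I_k.+1}, 1 <= INR (k.+1 ^ #|X|) * cm f R'.
Proof.
move=> hf; apply: NNPP => hn.
have hall : forall R' : {ffun X -> 'I_k.+1}, INR (k.+1 ^ #|X|) * cm f R' < 1.
  move=> R'; apply: Rnot_le_lt => h; apply: hn; by exists R'.
have htot : \big[Rplus/0]_(R' : {ffun X -> 'I_k.+1}) cm f R' = 1.
  have := probN_ty f (n := k) xpredT; rewrite /= => <-.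
  by rewrite probNE wsum_all (pmf_sum hf) pow1.
have := sum_lt [ffun _ => ord0] hall.
move=> h; rewrite -big_distrr /= htot sum_cst card_types in h.
exact: (Rlt_irrefl _ h).
Qed.

Definition oeqb (o1 o2 : option hyp) : bool :=
  match o1, o2 with
  | Some a, Some b => hyp_eqb a b
  | None, None => true
  | _, _ => false
  end.

Lemma oeqb_eq o1 o2 : oeqb o1 o2 -> o1 = o2.
Proof. by case: o1 o2 => [[]|] [[]|]. Qed.

Definition rleb (a b : R) : bool := if Rle_dec a b then true else false.

Definition one (_ : X) : R := 1.

Lemma wt_one n (x : n.-tuple X) : wt one x = 1.
Proof. by rewrite /wt big1. Qed.

Variable m : nat.
Variable g : m.-tuple X -> option hyp.

Definition ucnt (f : X -> R) (Q : {ffun X -> 'I_m.+1}) (j : option hyp) :=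
  probN f (fun z : m.-tuple X => (ty z == Q) && oeqb (g z) j).

Definition dec (Q : {ffun X -> 'I_m.+1}) : option hyp :=
  let c1 := ucnt one Q (Some H1) in
  let c2 := ucnt one Q (Some H2) in
  let c0 := ucnt one Q None in
  if rleb c0 c1 && rleb c2 c1 then Some H1 else if rleb c0 c2 then Some H2 else None.

Lemma decomp (f : X -> R) (S : pred (m.-tuple X)) :
  probN f S = probN f (fun z => S z && oeqb (g z) (Some H1)) +
              probN f (fun z => S z && oeqb (g z) (Some H2)) +
              probN f (fun z => S z && oeqb (g z) None).
Proof.
rewrite !probNE (bigID (fun z => oeqb (g z) (Some H1))) /=.
rewrite [X in _ + X](bigID (fun z => oeqb (g z) (Some H2))) /= Rplus_assoc.
congr (_ + (_ + _)); apply: eq_bigl => z; by case: (S z); case: (g z) => [[]|].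
Qed.

Lemma const_on (f : X -> R) (S : pred (m.-tuple X)) w :
  (forall z, S z -> wt f z = w) -> probN f S = w * probN one S.
Proof.
move=> h; rewrite !probNE big_distrr /=; apply: eq_bigr => z hz.
by rewrite h // wt_one Rmult_1_r.
Qed.

Lemma maj (f : X -> R) (Q : {ffun X -> 'I_m.+1}) :
  (forall a, 0 <= f a) -> cm f Q <= 3 * ucnt f Q (dec Q).
Proof.
move=> hf; case: (pickP (fun z : m.-tuple X => ty z == Q)) => [z0 hz0|hnone]; last first.
  rewrite /cm (probN_eq _ (B := fun _ => false)) ?probN_pred0; last by move=> z; rewrite hnone.
  have := probN_ge0 (fun z : m.-tuple X => (ty z == Q) && oeqb (g z) (dec Q)) hf.
  rewrite /ucnt; lra.
set w := wt f z0.
have hw : 0 <= w by apply: wt_ge0.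
have hc : forall S : pred (m.-tuple X), (forall z, S z -> ty z == Q) ->
    probN f S = w * probN one S.
  move=> S hS; apply: const_on => z /hS /eqP hz; apply: wt_ty; rewrite hz; exact/esym/eqP.
have hu : forall j, ucnt f Q j = w * ucnt one Q j.
  by move=> j; apply: hc => z /andP [].
rewrite /cm decomp.
rewrite -[probN f (fun z => _ && oeqb _ (Some H1))]/(ucnt f Q (Some H1)).
rewrite -[probN f (fun z => _ && oeqb _ (Some H2))]/(ucnt f Q (Some H2)).
rewrite -[probN f (fun z => _ && oeqb _ None)]/(ucnt f Q None) !hu.
have hg0 : forall j, 0 <= ucnt one Q j.
  move=> j; rewrite /ucnt; apply: (@probN_ge0 X one m) => a; rewrite /one; lra.
have key : ucnt one Q (Some H1) + ucnt one Q (Some H2) + ucnt one Q None <= 3 * ucnt one Q (dec Q).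
  rewrite /dec /rleb.
  set c1 := ucnt one Q (Some H1); set c2 := ucnt one Q (Some H2); set c0 := ucnt one Q None.
  case: (Rle_dec c0 c1) => h1; case: (Rle_dec c2 c1) => h2; case: (Rle_dec c0 c2) => h3 /=;
  rewrite -/c1 -/c2 -/c0;
  repeat match goal with H : ~ (_ <= _) |- _ => apply Rnot_le_lt in H end; lra.
nra.
Qed.

End Maj.

Lemma nat_above x : exists J : nat, x < INR J /\ (0 < J)%N.
Proof.
case: (Rle_lt_dec x 0) => hx.
  exists 1%N; split => //; rewrite /=; lra.
have [J [hJ hJ0]] := archimed_cor1 (/ x) (Rinv_0_lt_compat _ hx).
exists J; split; last by apply/ltP.
have hJ' : 0 < INR J by apply: lt_0_INR.
have := Rinv_lt_contravar _ _ (Rmult_lt_0_compat _ _ (Rinv_0_lt_compat _ hJ') (Rinv_0_lt_compat _ hx)) hJ.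
by rewrite !Rinv_inv.
Qed.

Lemma INR_expn m e : INR (m ^ e) = INR m ^ e.
Proof.
elim: e => [|e IH]; first by rewrite expn0.
by rewrite expnS -multE mult_INR IH.
Qed.

Lemma poly_exp eta e : 0 < eta -> exists n1, forall n, (n1 <= n)%N ->
  INR ((n.+1) ^ e) <= exp (eta * INR n).
Proof.
move=> heta; case: e => [|e].
  exists 0%N => n _; rewrite /=; have := exp_ineq1_le (eta * INR n).
  have := pos_INR n; nra.
set c := eta / INR e.+1.
have he : 0 < INR e.+1 by apply: lt_0_INR; apply/ltP.
have hc : 0 < c by apply: Rdiv_lt_0_compat.
have hce : INR e.+1 * c = eta by rewrite /c; field; lra.
have [n1 [hn1 _]] := nat_above (4 / (c * c)).
exists n1 => n hn.
have hnn : INR n1 <= INR n by apply: le_INR; apply/leP.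
have h4 : 4 <= c * c * INR n.
  have hcc : 0 < c * c by nra.
  have : 4 / (c * c) * (c * c) = 4 by field; lra.
  nra.
have hb : INR n + 1 <= exp (c * INR n).
  have hn0 := pos_INR n.
  have hsq : forall a, 0 <= a -> (1 + a) * (1 + a) <= exp (a + a).
    move=> a ha; rewrite exp_plus; have e1 := exp_ineq1_le a.
    apply: Rmult_le_compat => //; lra.
  have ha : 0 <= c * INR n / 2 by apply: Rmult_le_pos; [nra|lra].
  have := hsq _ ha.
  have -> : c * INR n / 2 + c * INR n / 2 = c * INR n by field.
  have : INR n <= (c * INR n / 2) * (c * INR n / 2).
    have -> : (c * INR n / 2) * (c * INR n / 2) = (c * c * INR n) * INR n / 4 by field.
    have := Rmult_le_compat_r (INR n) _ _ hn0 h4; lra.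
  move: ha; set a := c * INR n / 2; nra.
rewrite INR_expn S_INR -hce Rmult_assoc exp_nat; apply: pow_incr; split => //.
have := pos_INR n; lra.
Qed.

Lemma nat_poly n k d : (k <= n)%N -> (0 < n)%N ->
  (6 * (k.+1 ^ d * n.+1 ^ d) <= n.+1 ^ (d + d + 3))%N.
Proof.
move=> hkn hn.
have h1 : (k.+1 ^ d <= n.+1 ^ d)%N by case: d => [|d] //; rewrite leq_exp2r.
have h3 : (6 <= n.+1 ^ 3)%N.
  have : (2 ^ 3 <= n.+1 ^ 3)%N by rewrite leq_exp2r // ltnS.
  by rewrite (_ : 2 ^ 3 = 8)%N //; lia.
rewrite !expnD.
have h4 : (k.+1 ^ d * n.+1 ^ d <= n.+1 ^ d * n.+1 ^ d)%N by apply: leq_mul.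
have := leq_mul h3 h4; rewrite mulnC; lia.
Qed.

Lemma exp_mul_le A a b : 0 <= A -> A <= exp a -> A * exp b <= exp (a + b).
Proof.
move=> hA h; rewrite exp_plus; apply: Rmult_le_compat_r => //; left; exact: exp_pos.
Qed.

Lemma num1 Nn eta eps g n : 0 <= Nn -> Nn <= exp (eta * n) -> eta <= eps -> 0 <= n ->
  Nn * exp (- ((g + eps) * n)) <= exp (- (g * n)).
Proof.
move=> h0 h hee hn; eapply Rle_trans; [exact: exp_mul_le h0 h|]; apply: exp_le; nra.
Qed.

Lemma num2 A u K dl eta n k : 0 < u -> 1 <= K -> 0 <= dl <= u -> 0 < eta <= u ->
  0 <= k <= n -> 2 * K <= n -> n <= K * (k + 1) -> 0 <= A -> A <= exp (eta * n) ->
  A * exp (- ((8 * K * u - dl) * (n + k))) <= exp (- ((8 * K * u + u) * n)).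
Proof.
move=> hu hK hdl heta hk hn hKk hA h; eapply Rle_trans; [exact: exp_mul_le hA h|]; apply: exp_le.
have e1 : 8 * u * (K * k) >= 8 * u * (n - K) by nra.
have e2 : 8 * u * K <= 4 * u * n by nra.
have e3 : eta * n <= u * n by nra.
have e4 : dl * n <= u * n by nra.
have e5 : dl * k <= u * n by nra.
nra.
Qed.

Lemma num3 Nn Nk E dl0 dl eta L n k : dl < E -> 0 <= dl0 <= dl / 4 -> eta <= dl / 2 ->
  L * k <= dl * n / 4 -> 0 <= k -> 0 <= n -> 0 <= Nn -> 0 <= Nk ->
  6 * (Nk * Nn) <= exp (eta * n) ->
  Nn * (3 * exp (- ((E - dl0) * (n + k))) * Nk * exp (L * k)) <= / 2 * exp (- ((E - dl) * n)).
Proof.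
move=> hE hdl0 heta hL hk hn hNn hNk h.
have -> : Nn * (3 * exp (- ((E - dl0) * (n + k))) * Nk * exp (L * k)) =
  / 2 * ((6 * (Nk * Nn)) * exp (- ((E - dl0) * (n + k)) + L * k)) by rewrite exp_plus; field.
apply: Rmult_le_compat_l; first lra.
eapply Rle_trans; [apply: exp_mul_le _ h; nra|].
apply: exp_le.
have : (E - dl0) * k >= 0 by nra.
have : eta * n <= dl / 2 * n by nra.
nra.
Qed.

Lemma num4 r J E dl n : 0 < r -> E + 1 <= r * INR J -> 0 < dl -> (1 <= n)%N ->
  exp (- r) ^ (J * n) <= / 2 * exp (- ((E - dl) * INR n)).
Proof.
move=> hr hJ hdl hn.
rewrite -exp_nat mult_INR.
have hn1 : 1 <= INR n by apply: (le_INR 1); apply/leP.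
have e1 := exp_ineq1_le 1.
have -> : / 2 * exp (- ((E - dl) * INR n)) = exp (- ((E - dl) * INR n) - 1) * (exp 1 / 2).
  rewrite (exp_plus (- ((E - dl) * INR n)) (-1)) (exp_Ropp 1); field; have := exp_pos 1; lra.
rewrite -[X in X <= _]Rmult_1_r; apply: Rmult_le_compat; [left; exact: exp_pos|lra| |lra].
apply: exp_le.
have : (E + 1) * INR n <= r * INR J * INR n by nra.
nra.
Qed.

Lemma INR_addn m n : INR (m + n)%N = INR m + INR n.
Proof. by rewrite -plusE plus_INR. Qed.
Lemma INR_muln m n : INR (m * n)%N = INR m * INR n.
Proof. by rewrite -multE mult_INR. Qed.
Lemma INR_ge1 m : (0 < m)%N -> 1 <= INR m.
Proof. by move=> h; apply: (le_INR 1); apply/leP. Qed.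

Section Stage1.
Variable X : finType.
Variables P1 P2 : X -> R.
Hypothesis hP1 : full_pmf P1.
Hypothesis hP2 : full_pmf P2.

Lemma sharp_bound n k (g : (n + k).-tuple X -> option hyp) (Pa : X -> R) (hPa : full_pmf Pa)
  (Ra : {ffun X -> 'I_k.+1}) (Q : {ffun X -> 'I_n.+1}) lab bound :
  1 <= INR (k.+1 ^ #|X|) * cm Pa Ra ->
  probN Pa (fun s => oeqb (g s) lab) <= bound ->
  dec g (tadd Q Ra) = lab ->
  cm Pa Q <= 3 * bound * INR (k.+1 ^ #|X|).
Proof.
move=> hRa hb hdec.
have m1 := maj g (tadd Q Ra) (pmf_ge0 hPa); rewrite hdec in m1.
have m2 : ucnt g Pa (tadd Q Ra) lab <= bound.
  apply: Rle_trans hb; apply: probN_le; first exact: pmf_ge0.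
  by move=> z /andP [].
have m3 := cm_mult Q Ra (pmf_ge0 hPa).
have c0 : 0 <= cm Pa Q by apply: probN_ge0; exact: pmf_ge0.
have c1 : 0 <= cm Pa Ra by apply: probN_ge0; exact: pmf_ge0.
have hN : 0 <= INR (k.+1 ^ #|X|) by apply: pos_INR.
have : cm Pa Q <= INR (k.+1 ^ #|X|) * (cm Pa Q * cm Pa Ra) by nra.
nra.
Qed.

Lemma gen_bound n k (g : (n + k).-tuple X -> option hyp) (Pa Pj : X -> R) (hPa : full_pmf Pa)
  (hPj : full_pmf Pj) L (hL : forall a, exp (- L) <= Pa a)
  (Rj : {ffun X -> 'I_k.+1}) (Q : {ffun X -> 'I_n.+1}) lab bound :
  1 <= INR (k.+1 ^ #|X|) * cm Pj Rj ->
  probN Pa (fun s => oeqb (g s) lab) <= bound ->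
  dec g (tadd Q Rj) = lab ->
  cm Pa Q <= 3 * bound * INR (k.+1 ^ #|X|) * exp (L * INR k).
Proof.
move=> hRj hb hdec.
have m1 := maj g (tadd Q Rj) (pmf_ge0 hPa); rewrite hdec in m1.
have m2 : ucnt g Pa (tadd Q Rj) lab <= bound.
  apply: Rle_trans hb; apply: probN_le; first exact: pmf_ge0.
  by move=> z /andP [].
have m3 := cm_mult Q Rj (pmf_ge0 hPa).
have m4 : exp (- L) ^ k * cm Pj Rj <= cm Pa Rj.
  apply: cm_lower => // a; split; [exact: pmf_ge0 | exact: pmf_le1].
have c0 : 0 <= cm Pa Q by apply: probN_ge0; exact: pmf_ge0.
have c1 : 0 <= cm Pj Rj by apply: probN_ge0; exact: pmf_ge0.
have hN : 0 <= INR (k.+1 ^ #|X|) by apply: pos_INR.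
have e1 : exp (- L) ^ k * exp (L * INR k) = 1.
  by rewrite -exp_nat -exp_plus -(exp_0); congr exp; ring.
have hE : 0 < exp (L * INR k) by apply: exp_pos.
have : cm Pa Q <= INR (k.+1 ^ #|X|) * exp (L * INR k) * (cm Pa Q * (exp (- L) ^ k * cm Pj Rj)).
  have -> : INR (k.+1 ^ #|X|) * exp (L * INR k) * (cm Pa Q * (exp (- L) ^ k * cm Pj Rj))
     = cm Pa Q * (INR (k.+1 ^ #|X|) * cm Pj Rj) * (exp (- L) ^ k * exp (L * INR k)) by ring.
  rewrite e1; nra.
have : cm Pa Q * (exp (- L) ^ k * cm Pj Rj) <= cm Pa Q * cm Pa Rj by apply: Rmult_le_compat_l.
move=> h1 h2.
have h3 : INR (k.+1 ^ #|X|) * exp (L * INR k) * (cm Pa Q * (exp (- L) ^ k * cm Pj Rj)) <=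
          INR (k.+1 ^ #|X|) * exp (L * INR k) * (3 * bound).
  apply: Rmult_le_compat_l; first nra.
  lra.
lra.
Qed.

End Stage1.

Section S1.
Variable X : finType.
Variables P1 P2 : X -> R.
Hypothesis hP1 : full_pmf P1.
Hypothesis hP2 : full_pmf P2.

Lemma stage1 gamma E1 E2 : 0 < gamma -> in_Rbar_gamma P1 P2 gamma E1 E2 ->
  forall delta, 0 < delta ->
  exists n1, forall n, (n1 <= n)%N -> exists h : n.-tuple X -> option hyp,
  probN P1 (fun x => is_rej (h x)) <= exp (- (gamma * INR n)) /\
  probN P2 (fun x => is_rej (h x)) <= exp (- (gamma * INR n)) /\
  (delta < E1 -> probN P1 (fun x => is_acc (h x) H2) <= / 2 * exp (- ((E1 - delta) * INR n))) /\
  (delta < E2 -> probN P2 (fun x => is_acc (h x) H1) <= / 2 * exp (- ((E2 - delta) * INR n))).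
Proof.
move=> hg hRb delta hd.
have [L [hL hLb]] := pmin_ex hP1 hP2.
have [K [hK hK0]] := nat_above (4 * L / delta).
set KR := INR K.
have hKR : 1 <= KR by apply: INR_ge1.
set u := gamma / (8 * KR).
have hu : 0 < u by apply: Rdiv_lt_0_compat; lra.
have hgu : gamma = 8 * KR * u by rewrite /u; field; lra.
set dl := Rmin (delta / 4) u.
have hdl0 : 0 < dl by apply: Rmin_pos; lra.
have hdl1 : dl <= delta / 4 by apply: Rmin_l.
have hdl2 : dl <= u by apply: Rmin_r.
set eta := Rmin (delta / 2) u.
have het0 : 0 < eta by apply: Rmin_pos; lra.
have het1 : eta <= delta / 2 by apply: Rmin_l.
have het2 : eta <= u by apply: Rmin_r.
have [n0g Hg] := hRb dl hdl0.
have [n1 Hpoly] := poly_exp (#|X| + #|X| + 3) het0.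
exists (maxn (maxn n0g n1) (maxn (2 * K) 1)) => n.
rewrite !geq_max => /andP [/andP [hn0 hn1] /andP [hnK hn1']].
set k := (n %/ K)%N.
have hkn : (k <= n)%N by apply: leq_div.
have hKk1 : (k * K <= n)%N by apply: leq_trunc_div.
have hKk2 : (n < k.+1 * K)%N by apply: ltn_ceil.
have [g [g1 [g2 g3]]] := Hg (n + k)%N (leq_trans hn0 (leq_addr _ _)).
have [R1 hR1] := best_type k hP1.
have [R2 hR2] := best_type k hP2.
set Nk := INR (k.+1 ^ #|X|).
set Nn := INR (n.+1 ^ #|X|).
have hNk : 1 <= Nk by apply: INR_ge1; rewrite expn_gt0.
have hNn : 1 <= Nn by apply: INR_ge1; rewrite expn_gt0.
have hpoly : 6 * (Nk * Nn) <= exp (eta * INR n).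
  apply: Rle_trans (Hpoly n hn1).
  have := nat_poly #|X| hkn hn1'; move/leP/le_INR.
  rewrite !INR_muln; have -> : INR 6 = 6 by rewrite /=; ring.
  done.
have rn := pos_INR n; have rk := pos_INR k.
have rkn : INR k <= INR n by apply: le_INR; apply/leP.
have rK1 : INR k * KR <= INR n by rewrite -INR_muln; apply: le_INR; apply/leP.
have rK2 : INR n <= KR * (INR k + 1).
  have := hKk2; move/ltnW/leP/le_INR; rewrite INR_muln S_INR.
  by rewrite -/KR Rmult_comm.
have rK3 : 2 * KR <= INR n.
  have -> : 2 * KR = INR (2 * K) by rewrite INR_muln /KR; simpl; ring.
  by apply: le_INR; apply/leP.
have hLk : L * INR k <= delta * INR n / 4.
  have hLK : L <= delta * KR / 4.
    have e := Rmult_lt_compat_r delta _ _ hd hK.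
    have e2 : 4 * L / delta * delta = 4 * L by field; lra.
    rewrite e2 -/KR in e; lra.
  have : L * INR k * KR <= delta * KR / 4 * INR k * KR.
    apply: Rmult_le_compat_r; [lra|]; apply: Rmult_le_compat_r => //.
  have : delta * KR / 4 * INR k * KR <= delta * INR n / 4 * KR.
    have -> : delta * KR / 4 * INR k * KR = delta / 4 * (INR k * KR) * KR by field.
    have -> : delta * INR n / 4 * KR = delta / 4 * INR n * KR by field.
    apply: Rmult_le_compat_r; [lra|]; apply: Rmult_le_compat_l; lra.
  move=> h1 h2; apply: (Rmult_le_reg_r KR); lra.
set theta := exp (- ((gamma + u) * INR n)).
pose H (Q : {ffun X -> 'I_n.+1}) : option hyp :=
  if Rlt_dec theta (cm P1 Q) then dec g (tadd Q R1)
  else if Rlt_dec theta (cm P2 Q) then dec g (tadd Q R2) else None.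
have hr1 : probN P1 (fun s => oeqb (g s) None) <= exp (- ((gamma - dl) * INR (n + k))).
  apply: Rle_trans g3; have := probN_ge0 (fun s => is_rej (g s)) (pmf_ge0 hP2).
  have : probN P1 (fun s => oeqb (g s) None) = probN P1 (fun s => is_rej (g s)).
    by apply: probN_eq => s; case: (g s).
  lra.
have hr2 : probN P2 (fun s => oeqb (g s) None) <= exp (- ((gamma - dl) * INR (n + k))).
  apply: Rle_trans g3; have := probN_ge0 (fun s => is_rej (g s)) (pmf_ge0 hP1).
  have : probN P2 (fun s => oeqb (g s) None) = probN P2 (fun s => is_rej (g s)).
    by apply: probN_eq => s; case: (g s).
  lra.
have h3Nk : 3 * Nk <= exp (eta * INR n) by nra.
have noRej : forall (Pa : X -> R) (hPa : full_pmf Pa) (Ra : {ffun X -> 'I_k.+1}),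
    1 <= Nk * cm Pa Ra ->
    probN Pa (fun s => oeqb (g s) None) <= exp (- ((gamma - dl) * INR (n + k))) ->
    forall Q, theta < cm Pa Q -> dec g (tadd Q Ra) <> None.
  move=> Pa hPa Ra hRa hrej Q hQ hdec.
  have := sharp_bound hPa hRa hrej hdec.
  have := num2 (A := 3 * Nk) hu hKR (conj (Rlt_le _ _ hdl0) hdl2) (conj het0 het2)
    (conj rk rkn) rK3 rK2 ltac:(lra) h3Nk.
  rewrite -hgu INR_addn -/Nk -/theta.
  move=> a b; nra.
have hrejQ : forall Q, is_rej (H Q) -> cm P1 Q <= theta /\ cm P2 Q <= theta.
  move=> Q; rewrite /H.
  case: (Rlt_dec theta (cm P1 Q)) => c1.
    by case: (dec _ _) (noRej P1 hP1 R1 hR1 hr1 Q c1) => // _ [].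
  case: (Rlt_dec theta (cm P2 Q)) => c2.
    by case: (dec _ _) (noRej P2 hP2 R2 hR2 hr2 Q c2) => // _ [].
  move=> _; split; apply: Rnot_lt_le => //.
have hth : 0 <= theta by left; apply: exp_pos.
have hNnexp : Nn <= exp (eta * INR n) by nra.
exists (fun x => H (ty x)); split; [|split; [|split]].
- apply: Rle_trans (probN_ty_le (p := fun Q => is_rej (H Q)) (pmf_ge0 hP1) hth _) _.
    by move=> Q /hrejQ [].
  exact: num1 (pos_INR _) hNnexp het2 rn.
- apply: Rle_trans (probN_ty_le (p := fun Q => is_rej (H Q)) (pmf_ge0 hP2) hth _) _.
    by move=> Q /hrejQ [].
  exact: num1 (pos_INR _) hNnexp het2 rn.
- move=> hE1.
  set B := 3 * exp (- ((E1 - dl) * INR (n + k))) * Nk * exp (L * INR k).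
  have hB : 0 <= B.
    rewrite /B; apply: Rmult_le_pos; [apply: Rmult_le_pos; [apply: Rmult_le_pos; [lra| left; exact: exp_pos] | lra] | left; exact: exp_pos].
  apply: Rle_trans (probN_ty_le (p := fun Q => is_acc (H Q) H2) (pmf_ge0 hP1) hB _) _.
    move=> Q; rewrite /H.
    have gb1 : probN P1 (fun s => oeqb (g s) (Some H2)) <= exp (- ((E1 - dl) * INR (n + k))).
      apply: Rle_trans g1; right; apply: probN_eq => s; by case: (g s) => [[]|].
    case: (Rlt_dec theta (cm P1 Q)) => c1.
      case hd1: (dec g (tadd Q R1)) => [[]|] //= _.
      exact: (gen_bound hP1 hP1 (fun a => proj1 (hLb a)) hR1 gb1 hd1).
    case: (Rlt_dec theta (cm P2 Q)) => c2 //.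
    case hd2: (dec g (tadd Q R2)) => [[]|] //= _.
    exact: (gen_bound hP1 hP2 (fun a => proj1 (hLb a)) hR2 gb1 hd2).
  rewrite /B INR_addn.
  exact: num3 hE1 (conj (Rlt_le _ _ hdl0) hdl1) het1 hLk rk rn (pos_INR _) (pos_INR _) hpoly.
- move=> hE2.
  set B := 3 * exp (- ((E2 - dl) * INR (n + k))) * Nk * exp (L * INR k).
  have hB : 0 <= B.
    rewrite /B; apply: Rmult_le_pos; [apply: Rmult_le_pos; [apply: Rmult_le_pos; [lra| left; exact: exp_pos] | lra] | left; exact: exp_pos].
  apply: Rle_trans (probN_ty_le (p := fun Q => is_acc (H Q) H1) (pmf_ge0 hP2) hB _) _.
    move=> Q; rewrite /H.
    have gb2 : probN P2 (fun s => oeqb (g s) (Some H1)) <= exp (- ((E2 - dl) * INR (n + k))).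
      apply: Rle_trans g2; right; apply: probN_eq => s; by case: (g s) => [[]|].
    case: (Rlt_dec theta (cm P1 Q)) => c1.
      case hd1: (dec g (tadd Q R1)) => [[]|] //= _.
      exact: (gen_bound hP2 hP1 (fun a => proj2 (hLb a)) hR1 gb2 hd1).
    case: (Rlt_dec theta (cm P2 Q)) => c2 //.
    case hd2: (dec g (tadd Q R2)) => [[]|] //= _.
    exact: (gen_bound hP2 hP2 (fun a => proj2 (hLb a)) hR2 gb2 hd2).
  rewrite /B INR_addn.
  exact: num3 hE2 (conj (Rlt_le _ _ hdl0) hdl1) het1 hLk rk rn (pos_INR _) (pos_INR _) hpoly.
Qed.

End S1.

Lemma probN_le1 (X : finType) (P : X -> R) N (A : pred (N.-tuple X)) :
  full_pmf P -> probN P A <= 1.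
Proof.
move=> hP; apply: (Rle_trans _ (probN P (fun _ : N.-tuple X => true))).
  by apply: probN_le => //; exact: pmf_ge0.
by rewrite probNE wsum_all (pmf_sum hP) pow1; right.
Qed.

Lemma exp_ge1 x : 0 <= x -> 1 <= exp x.
Proof. move=> h; have := exp_ineq1_le x; lra. Qed.

Lemma probN_split_le (X : finType) (P : X -> R) n k (A : pred (n.-tuple X))
  (B : pred (n.-tuple X)) (C : pred (k.-tuple X)) :
  full_pmf P ->
  probN P (fun z : (n + k).-tuple X => A (tfst z) || (B (tfst z) && C (tsnd z))) <=
  probN P A + probN P B * probN P C.
Proof.
move=> hP; rewrite !probNE.
apply: Rle_trans (sum_union _ _ _) _.
  move=> z; apply: wt_ge0; exact: pmf_ge0.
rewrite (@wsum_split X P n k B C) -(probNE P A) -(@probN_marg X P n k A hP) probNE; right; done.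
Qed.

Lemma Rbar_to_R (X : finType) (P1 P2 : X -> R) (hP1 : full_pmf P1) (hP2 : full_pmf P2)
  (hneq : P1 <> P2) gamma (hg : 0 <= gamma) E1 E2 :
  in_Rbar_gamma P1 P2 gamma E1 E2 -> in_R_gamma P1 P2 gamma E1 E2.
Proof.
move=> hRb delta hd.
have [rho [[r0 r1] hT]] := chern_test hP1 hP2 hneq.
set r := - ln rho.
have hr : 0 < r.
  have : ln rho < ln 1 by apply: ln_increasing.
  rewrite ln_1 /r; lra.
have hrho : rho = exp (- r) by rewrite /r Ropp_involutive exp_ln.
have [J [hJ hJ0]] := nat_above ((Rabs E1 + Rabs E2 + 1) / r).
have hJr : Rabs E1 + Rabs E2 + 1 <= r * INR J.
  have e := Rmult_lt_compat_r r _ _ hr hJ.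
  have e2 : (Rabs E1 + Rabs E2 + 1) / r * r = Rabs E1 + Rabs E2 + 1 by field; lra.
  rewrite e2 in e; lra.
have hJE1 : E1 + 1 <= r * INR J.
  have := Rle_abs E1; have := Rabs_pos E2; lra.
have hJE2 : E2 + 1 <= r * INR J.
  have := Rle_abs E2; have := Rabs_pos E1; lra.
have hJR : 1 <= INR J by apply: INR_ge1.
have bnd : forall E n, E + 1 <= r * INR J -> (1 <= n)%N -> forall p, p <= rho ^ (J * n) ->
    p <= / 2 * exp (- ((E - delta) * INR n)).
  move=> E n hE hn p hp; apply: Rle_trans hp _; rewrite hrho; exact: num4.
case: (Rle_lt_dec gamma 0) => hg0.
- have g0 : gamma = 0 by lra.
  exists 1%N, (INR J), 1%N; split => //; split; first lra.
  move=> n hn.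
  have [T [t1 t2]] := hT (J * n)%N.
  exists (J * n)%N, (fun _ => (J * n)%N), T.
  split; [split => //|split; [|split; [|split; [|split]]]].
  + move=> s s' hs; split => //; congr T; apply: eq_from_tnth => i; symmetry; exact: hs.
  + by move=> s; rewrite INR_muln pow_1; right.
  + rewrite g0 Rmult_0_l Ropp_0 exp_0; exact: probN_le1.
  + rewrite g0 Rmult_0_l Ropp_0 exp_0; exact: probN_le1.
  + have := bnd E1 n hJE1 hn _ t1; have := exp_pos (- ((E1 - delta) * INR n)); lra.
  + have := bnd E2 n hJE2 hn _ t2; have := exp_pos (- ((E2 - delta) * INR n)); lra.
- have [n1 Hs] := stage1 hP1 hP2 hg0 hRb hd.
  exists 1%N, (INR J.+1), (maxn n1 1); split => //; split.
    by apply: lt_0_INR; apply/ltP.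
  move=> n; rewrite geq_max => /andP [hn1 hn].
  have [h [hr1 [hr2 [he1 he2]]]] := Hs n hn1.
  have [T [t1 t2]] := hT (J * n)%N.
  pose tau := fun z : (n + J * n).-tuple X => if is_rej (h (tfst z)) then (n + J * n)%N else n.
  pose d := fun z : (n + J * n).-tuple X =>
    match h (tfst z) with Some v => v | None => T (tsnd z) end.
  have hJn : (0 < J * n)%N by rewrite muln_gt0 hJ0.
  have taueq : forall z, (n < tau z)%N = is_rej (h (tfst z)).
    move=> z; rewrite /tau; case: (is_rej _) => //; [lia | by rewrite ltnn].
  exists (n + J * n)%N, tau, d.
  split; [split|split; [|split; [|split; [|split]]]].
  + by move=> s; rewrite /tau; case: (is_rej _) => //; apply: leq_addr.
  + move=> s s' hs; rewrite /tau /d.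
    case hrej: (is_rej (h (tfst s))).
    * have -> : s' = s by apply: eq_from_tnth => i; symmetry; apply: hs; rewrite /tau hrej.
      by rewrite hrej.
    * have -> : tfst s' = tfst s.
        apply: eq_from_tnth => i; rewrite !tnth_mktuple; symmetry; apply: hs.
        by rewrite /tau hrej /=.
      by rewrite hrej; move: hrej; case: (h (tfst s)).
  + move=> s; rewrite pow_1; apply: (Rle_trans _ (INR (n + J * n))).
      by apply: le_INR; apply/leP; rewrite /tau; case: (is_rej _) => //; apply: leq_addr.
    rewrite INR_addn INR_muln S_INR; right; ring.
  + apply: Rle_trans hr1; right.
    rewrite -(@probN_marg X P1 n (J * n) (fun x => is_rej (h x)) hP1); apply: probN_eq; exact: taueq.
  + apply: Rle_trans hr2; right.
    rewrite -(@probN_marg X P2 n (J * n) (fun x => is_rej (h x)) hP2); apply: probN_eq; exact: taueq.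
  + case: (Rle_lt_dec E1 delta) => hE.
      apply: Rle_trans (probN_le1 _ hP1) _; apply: exp_ge1.
      have := pos_INR n; nra.
    have step : probN P1 (fun z => hyp_eqb (d z) H2) <=
      probN P1 (fun z : (n + J * n).-tuple X => (fun x => is_acc (h x) H2) (tfst z) ||
        ((fun x => is_rej (h x)) (tfst z) && (fun y => hyp_eqb (T y) H2) (tsnd z))).
      apply: probN_le; first exact: pmf_ge0.
      by move=> z; rewrite /d /=; case: (h (tfst z)) => [[]|].
    apply: Rle_trans step _.
    apply: Rle_trans (@probN_split_le X P1 n (J * n) (fun x => is_acc (h x) H2) (fun x => is_rej (h x)) (fun y => hyp_eqb (T y) H2) hP1) _.
    have := he1 hE; have := bnd E1 n hJE1 hn _ t1.
    have := probN_le1 (fun x => is_rej (h x)) hP1.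
    have := probN_ge0 (fun x => is_rej (h x)) (pmf_ge0 hP1).
    have := probN_ge0 (fun y : (J * n).-tuple X => hyp_eqb (T y) H2) (pmf_ge0 hP1).
    nra.
  + case: (Rle_lt_dec E2 delta) => hE.
      apply: Rle_trans (probN_le1 _ hP2) _; apply: exp_ge1.
      have := pos_INR n; nra.
    have step : probN P2 (fun z => hyp_eqb (d z) H1) <=
      probN P2 (fun z : (n + J * n).-tuple X => (fun x => is_acc (h x) H1) (tfst z) ||
        ((fun x => is_rej (h x)) (tfst z) && (fun y => hyp_eqb (T y) H1) (tsnd z))).
      apply: probN_le; first exact: pmf_ge0.
      by move=> z; rewrite /d /=; case: (h (tfst z)) => [[]|].
    apply: Rle_trans step _.
    apply: Rle_trans (@probN_split_le X P2 n (J * n) (fun x => is_acc (h x) H1) (fun x => is_rej (h x)) (fun y => hyp_eqb (T y) H1) hP2) _.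
    have := he2 hE; have := bnd E2 n hJE2 hn _ t2.
    have := probN_le1 (fun x => is_rej (h x)) hP2.
    have := probN_ge0 (fun x => is_rej (h x)) (pmf_ge0 hP2).
    have := probN_ge0 (fun y : (J * n).-tuple X => hyp_eqb (T y) H1) (pmf_ge0 hP2).
    nra.
Qed.

Unset Implicit Arguments.
Theorem lemma1 (X : finType) (P1 P2 : X -> R)
  (hP1 : full_pmf P1) (hP2 : full_pmf P2) (hneq : P1 <> P2)
  (gamma : R) (hgamma : 0 <= gamma) (E1 E2 : R) :
  in_Rbar_gamma P1 P2 gamma E1 E2 <-> in_R_gamma P1 P2 gamma E1 E2.
Proof.
split; [exact: Rbar_to_R | exact: R_to_Rbar].
Qed.
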